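(* Let $R$ be a representation of $\mathbf{Q}$ with dimension vector $(1,4,1)$ which is either globally surjective but not locally injective, or globally injective but not locally surjective. Then for no $(\alpha,\gamma)\in\mathbb{R}^2$ is $R$ $\theta$-stable, where $\theta=(\alpha,-(\alpha+\gamma)/4,\gamma)$.
   Context: The quiver $\mathbf{Q}$ has vertices $-1,0,1$, arrows $\eta_0,\dots,\eta_3:-1\to0$, $\phi_0,\dots,\phi_3:0\to1$ and relations $\phi_i\eta_j+\phi_j\eta_i=0$; a representation consists of vector spaces $V_{-1},V_0,V_1$ and linear maps $f_i:V_{-1}\to V_0$, $g_i:V_0\to V_1$ with $g_if_j+g_jf_i=0$. $R$ is globally injective (resp. surjective) if $\sum\lambda_if_i$ is injective (resp. $\sum\lambda_ig_i$ surjective) for all $\lambda\in\mathbb{C}^4\setminus\{0\}$; locally injective (resp. surjective) if this holds for all $[\lambda]\in\mathbb{P}^3$ outside a closed subset of codimension at least 2. $R$ is $\theta$-stable if $\theta\cdot\dim R=0$ and $\theta\cdot\dim S<0$ for every nonzero proper subrepresentation $S$. *)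

(* Defs.v *)
From HB Require Import structures.
From mathcomp Require Import all_boot all_order all_algebra.
From mathcomp Require Import complex.
From mathcomp Require Import Rstruct.
From mathcomp Require Import mpoly.
Set Implicit Arguments.
Unset Strict Implicit.
Unset Printing Implicit Defensive.
Import Order.TTheory GRing.Theory Num.Theory.
Local Open Scope ring_scope.

Notation RR := Rdefinitions.R.
Notation CC := (complex Rdefinitions.R).

(* A representation of Q with dimension vector (1,4,1), in chosen bases
   V_{-1} = C^1, V_0 = C^4, V_1 = C^1.  Vectors are row vectors and linear
   maps act on the right: f_i : V_{-1} -> V_0 is v |-> v *m rf i, and
   g_i : V_0 -> V_1 is w |-> w *m rg i.  Hence g_i o f_j is the matrix
   rf j *m rg i, and the relation g_i f_j + g_j f_i = 0 reads as below. *)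
Record rep141 := Rep141 {
  rf : 'I_4 -> 'M[CC]_(1, 4);
  rg : 'I_4 -> 'M[CC]_(4, 1);
  rrel : forall i j : 'I_4, rf j *m rg i + rf i *m rg j = 0
}.

Definition nonzero4 (lam : 'I_4 -> CC) : Prop := exists i, lam i != 0.

Definition fsum (R : rep141) (lam : 'I_4 -> CC) : 'M[CC]_(1, 4) :=
  \sum_(i < 4) lam i *: rf R i.
Definition gsum (R : rep141) (lam : 'I_4 -> CC) : 'M[CC]_(4, 1) :=
  \sum_(i < 4) lam i *: rg R i.

(* injectivity / surjectivity of v |-> v *m M : row_free / row_full *)
Definition glob_inj (R : rep141) : Prop :=
  forall lam, nonzero4 lam -> row_free (fsum R lam).
Definition glob_surj (R : rep141) : Prop :=
  forall lam, nonzero4 lam -> row_full (gsum R lam).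

(* ---- Subsets of P^3, represented by their (punctured) affine cones: a set
   of nonzero lambda in C^4. ---- *)
Definition pset := ('I_4 -> CC) -> Prop.
Definition pincl (Z1 Z2 : pset) : Prop := forall lam, Z1 lam -> Z2 lam.
Definition psame (Z1 Z2 : pset) : Prop := forall lam, Z1 lam <-> Z2 lam.
Definition pstrict (Z1 Z2 : pset) : Prop := pincl Z1 Z2 /\ ~ pincl Z2 Z1.

Definition proj_closed (Z : pset) : Prop :=
  exists S : {mpoly CC[4]} -> Prop,
    (forall p, S p -> exists d : nat, p \is d.-homog) /\
    forall lam, Z lam <-> (nonzero4 lam /\ forall p, S p -> p.@[lam] = 0).

Definition proj_irred (Z : pset) : Prop :=
  [/\ proj_closed Z, exists lam, Z lam &
      forall Z1 Z2, proj_closed Z1 -> proj_closed Z2 ->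
        (forall lam, Z lam <-> (Z1 lam \/ Z2 lam)) -> psame Z Z1 \/ psame Z Z2].

Definition proj_dim_le (Z : pset) (d : nat) : Prop :=
  ~ exists Y : nat -> pset,
      (forall k, (k <= d.+1)%N -> proj_irred (Y k) /\ pincl (Y k) Z) /\
      (forall k, (k < d.+1)%N -> pstrict (Y k) (Y k.+1)).

(* closed subset of P^3 of codimension >= 2, i.e. dimension <= 3 - 2 = 1 *)
Definition codim_ge2 (Z : pset) : Prop := proj_closed Z /\ proj_dim_le Z 1.

Definition loc_inj (R : rep141) : Prop :=
  exists Z, codim_ge2 Z /\
    forall lam, nonzero4 lam -> ~ Z lam -> row_free (fsum R lam).
Definition loc_surj (R : rep141) : Prop :=
  exists Z, codim_ge2 Z /\
    forall lam, nonzero4 lam -> ~ Z lam -> row_full (gsum R lam).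

Definition theta_dot (th : RR * RR * RR) (d : nat * nat * nat) : RR :=
  th.1.1 * d.1.1%:R + th.1.2 * d.1.2%:R + th.2 * d.2%:R.

Definition is_subrep (R : rep141) (Wm : 'M[CC]_1) (W0 : 'M[CC]_4)
  (Wp : 'M[CC]_1) : Prop :=
  forall i, (Wm *m rf R i <= W0)%MS /\ (W0 *m rg R i <= Wp)%MS.

Definition theta_stable (th : RR * RR * RR) (R : rep141) : Prop :=
  theta_dot th (1, 4, 1)%N = 0 /\
  forall (Wm : 'M[CC]_1) (W0 : 'M[CC]_4) (Wp : 'M[CC]_1),
    is_subrep R Wm W0 Wp ->
    ~ [/\ Wm = 0, W0 = 0 & Wp = 0] ->
    ~ [/\ (1%:M <= Wm)%MS, (1%:M <= W0)%MS & (1%:M <= Wp)%MS] ->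
    theta_dot th (\rank Wm, \rank W0, \rank Wp) < 0.

(* Main.v *)
Require Import Defs.
From HB Require Import structures.
From mathcomp Require Import all_boot all_order all_algebra.
From mathcomp Require Import complex Rstruct mpoly.
From Stdlib Require Import Classical FunctionalExtensionality.
From mathcomp Require Import ring zify lra.
Import Order.TTheory GRing.Theory Num.Theory.
Local Open Scope ring_scope.


Lemma meval_scale {h : {mpoly CC[4]}} {d} (c : CC) (lam : 'I_4 -> CC) :
  h \is d.-homog -> h.@[fun i => c * lam i] = c ^+ d * h.@[lam].
Proof.
move=> /dhomogP hd; rewrite !mevalE big_distrr /=.
apply: eq_big_seq => m /hd <-.
rewrite mulrCA; congr (_ * _).
rewrite [X in c ^+ X](_ : _ = \sum_i m i)%N; last exact: mdegE.
under eq_bigr do rewrite exprMn.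
by rewrite big_split /= prodrXr.
Qed.

Definition rowv (lam : 'I_4 -> CC) : 'rV[CC]_4 := \row_(i < 4) lam i.

Lemma nz_rowv lam : nonzero4 lam <-> rowv lam != 0.
Proof.
split.
  case=> i hi; apply/eqP => /rowP /(_ i); rewrite !mxE => hl.
  by rewrite hl eqxx in hi.
move=> h; apply: NNPP => hn; move/eqP: h; apply; apply/rowP => i.
rewrite !mxE; apply: NNPP => hi; apply: hn; exists i; exact/eqP.
Qed.

Lemma closed_cone Y : proj_closed Y ->
  forall lam c, c != 0 -> Y lam -> Y (fun i => c * lam i).
Proof.
move=> [S [hS hY]] lam c c0 /hY [[i hi] hp]; apply/hY; split.
  by exists i; rewrite mulf_neq0.
move=> p Sp; have [d hd] := hS p Sp.
by rewrite (meval_scale c lam hd) hp // mulr0.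
Qed.

Definition linf (A : 'cV[CC]_4) : {mpoly CC[4]} := \sum_(i < 4) A i 0 *: 'X_i.

Lemma linf_eval A lam : (linf A).@[lam] = (rowv lam *m A) 0 0.
Proof.
rewrite /linf (big_morph _ (mevalD lam) (meval0 lam)) !mxE.
apply: eq_bigr => i _; by rewrite mevalZ mevalXU mxE mulrC.
Qed.

Lemma linf_homog A : linf A \is 1.-homog.
Proof.
apply: rpred_sum => i _; apply: dhomogZ.
by rewrite dhomogX; apply/eqP; exact: mdeg1.
Qed.


Lemma mul_colE (u : 'rV[CC]_4) (C : 'M[CC]_4) j : (u *m col j C) 0 0 = (u *m C) 0 j.
Proof. by rewrite !mxE; apply: eq_bigr => k _; rewrite mxE. Qed.

Lemma exists_dual (p q : 'rV[CC]_4) : ~~ (p <= q)%MS ->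
  exists A : 'cV[CC]_4, (p *m A) 0 0 = 1 /\ (q *m A) 0 0 = 0.
Proof.
rewrite submxE => hpq.
have [j hj] : exists j, (p *m cokermx q) 0 j != 0.
  apply: NNPP => hn; move/negP: hpq => hpq; apply: hpq; apply/eqP/rowP => j.
  apply: NNPP => hj; apply: hn; exists j; apply/eqP => E; apply: hj; by rewrite E mxE.
exists (((p *m cokermx q) 0 j)^-1 *: col j (cokermx q)).
(split; rewrite -scalemxAr [LHS]mxE mul_colE).
  (exact: (mulVf hj)).
have E : (q *m cokermx q) 0 j = 0 by rewrite mulmx_coker mxE.
(rewrite E; exact: mulr0).
Qed.


Definition Ppoly (h : {mpoly CC[4]}) (p0 q0 : 'I_4 -> CC) : {poly CC} :=
  \sum_(m <- msupp h) h@_m *: \prod_(i < 4) (p0 i *: 'X + (q0 i)%:P) ^+ m i.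

Lemma Ppoly_eval h p0 q0 t : (Ppoly h p0 q0).[t] = h.@[fun i => t * p0 i + q0 i].
Proof.
rewrite /Ppoly mevalE horner_sum; apply: eq_bigr => m _.
rewrite hornerZ horner_prod; congr (_ * _); apply: eq_bigr => i _.
by rewrite horner_exp !hornerE mulrC.
Qed.

Definition gpoly (P : {poly CC}) A B : {mpoly CC[4]} :=
  \sum_(k < (size P).-1.+1) P`_k *: (linf A ^+ k * linf B ^+ ((size P).-1 - k)).

Lemma gpoly_homog P A B : gpoly P A B \is ((size P).-1).-homog.
Proof.
apply: rpred_sum => k _; apply: dhomogZ.
have := dhomogM (dhomogMn k (linf_homog A)) (dhomogMn ((size P).-1 - k) (linf_homog B)).
by rewrite !mul1n subnKC // -ltnS.
Qed.

Lemma gpoly_eval P A B lam : (gpoly P A B).@[lam] =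
  \sum_(k < (size P).-1.+1) P`_k * ((rowv lam *m A) 0 0) ^+ k
      * ((rowv lam *m B) 0 0) ^+ ((size P).-1 - k).
Proof.
rewrite /gpoly (big_morph _ (mevalD lam) (meval0 lam)); apply: eq_bigr => k _.
by rewrite mevalZ mevalM !rmorphXn /= !linf_eval mulrA.
Qed.

Lemma gpoly_p0 P A B lam : (rowv lam *m A) 0 0 = 1 -> (rowv lam *m B) 0 0 = 0 ->
  (gpoly P A B).@[lam] = lead_coef P.
Proof.
move=> ha hb; rewrite gpoly_eval ha hb big_ord_recr /= subnn expr0 expr1n !mulr1.
rewrite big1 ?add0r ?lead_coefE // => k _.
by rewrite expr0n subn_eq0 leqNgt ltn_ord /= mulr0.
Qed.

Lemma gpoly_root P A B lam : P != 0 -> (rowv lam *m B) 0 0 != 0 ->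
  P.[(rowv lam *m A) 0 0 / (rowv lam *m B) 0 0] = 0 ->
  (gpoly P A B).@[lam] = 0.
Proof.
set a := (rowv lam *m A) 0 0; set b := (rowv lam *m B) 0 0.
move=> P0 b0; rewrite horner_coef => hP.
have sP : size P = (size P).-1.+1 by rewrite prednK // size_poly_gt0.
move: hP; rewrite gpoly_eval; move: (size P).-1 sP => n -> hP.
rewrite -/a -/b.
apply: (@eq_trans _ _ (b ^+ n * \sum_(i < n.+1) P`_i * (a / b) ^+ i)); last first.
  rewrite hP; exact: mulr0.
rewrite big_distrr /=; apply: eq_bigr => k _.
have kn : (k <= n)%N by rewrite -ltnS.
have -> : b ^+ n = b ^+ k * b ^+ (n - k) by rewrite -exprD subnKC.
rewrite expr_div_n; field; exact: expf_neq0.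
Qed.


Lemma decompE (x p0 q0 : 'I_4 -> CC) a b :
  (forall i, x i = a * p0 i + b * q0 i) -> rowv x = a *: rowv p0 + b *: rowv q0.
Proof. by move=> hx; apply/rowP => i; rewrite !mxE hx. Qed.

Lemma e11D (M N : 'M[CC]_(1,1)) : (M + N) 0 0 = M 0 0 + N 0 0.
Proof. by rewrite mxE. Qed.
Lemma e11Z a (M : 'M[CC]_(1,1)) : (a *: M) 0 0 = a * M 0 0.
Proof. by rewrite mxE. Qed.

Lemma coordE (x p0 q0 : 'I_4 -> CC) a b (C : 'cV[CC]_4) :
  (forall i, x i = a * p0 i + b * q0 i) ->
  (rowv x *m C) 0 0 = a * (rowv p0 *m C) 0 0 + b * (rowv q0 *m C) 0 0.
Proof.
move=> /decompE ->; rewrite mulmxDl -!scalemxAl.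
by rewrite e11D !e11Z.
Qed.

Lemma irred_line (Y : pset) (p0 q0 r0 : 'I_4 -> CC) :
  proj_irred Y -> Y p0 -> Y q0 -> ~ Y r0 -> nonzero4 r0 ->
  ~~ (rowv q0 <= rowv p0)%MS -> ~~ (rowv p0 <= rowv q0)%MS ->
  (forall x, Y x \/ x = r0 -> exists a b : CC, forall i, x i = a * p0 i + b * q0 i) ->
  False.
Proof.
move=> [hcl _ hirr] Yp Yq nYr nzr nqp npq span.
have [S1 [hS1 hY]] := hcl.
have [A [pA qA]] := @exists_dual _ _ npq.
have [B [qB pB]] := @exists_dual _ _ nqp.
have coord : forall x, Y x \/ x = r0 -> forall i,
    x i = (rowv x *m A) 0 0 * p0 i + (rowv x *m B) 0 0 * q0 i.
  move=> x hx i; have [a [b hab]] := span x hx.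
  rewrite (@coordE x p0 q0 a b A hab) (@coordE x p0 q0 a b B hab) pA qA pB qB hab.
  congr (_ + _); congr (_ * _); ring.
have [h [S1h hr]] : exists h, S1 h /\ h.@[r0] != 0.
  apply: NNPP => hn; apply: nYr; apply/hY; split => // p Sp.
  apply: NNPP => hp; apply: hn; exists p; split => //; exact/eqP.
have [d hd] := hS1 h S1h.
set ar := (rowv r0 *m A) 0 0; set br := (rowv r0 *m B) 0 0.
have cr := coord r0 (or_intror erefl).
have br0 : br != 0.
  apply/eqP => br0; apply: nYr.
  have ar0 : ar != 0.
    apply/eqP => ar0; case: nzr => i; rewrite cr -/ar -/br ar0 br0.
    by rewrite !mul0r addr0 eqxx.
  have -> : r0 = (fun i => ar * p0 i).
    by apply: functional_extensionality => i; rewrite cr -/ar -/br br0 mul0r addr0.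
  exact: closed_cone.
set t := ar / br.
have hscale : forall x, Y x \/ x = r0 -> (rowv x *m B) 0 0 != 0 ->
    h.@[x] = ((rowv x *m B) 0 0) ^+ d *
      h.@[fun i => (rowv x *m A) 0 0 / (rowv x *m B) 0 0 * p0 i + q0 i].
  move=> x hx bx; rewrite -(meval_scale _ _ hd); apply: meval_eq => i.
  rewrite (coord x hx i); field; exact: bx.
set P := Ppoly h p0 q0.
have Pt : P.[t] != 0.
  rewrite Ppoly_eval; apply/eqP => E; move/eqP: hr; apply.
  by rewrite (hscale r0 (or_intror erefl) br0) -/ar -/br -/t E mulr0.
have P0 : P != 0 by apply/eqP => E; move: Pt; rewrite E horner0 eqxx.
set g := gpoly P A B.
pose Z1 : pset := fun lam => nonzero4 lam /\ forall s, (S1 s \/ s = linf B) -> s.@[lam] = 0.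
pose Z2 : pset := fun lam => nonzero4 lam /\ forall s, (S1 s \/ s = g) -> s.@[lam] = 0.
have cZ1 : proj_closed Z1.
  exists (fun s => S1 s \/ s = linf B); split => // s [/hS1 //| ->].
  exists 1%N; exact: linf_homog.
have cZ2 : proj_closed Z2.
  exists (fun s => S1 s \/ s = g); split => // s [/hS1 //| ->].
  exists (size P).-1; exact: gpoly_homog.
have dec : forall lam, Y lam <-> Z1 lam \/ Z2 lam.
  move=> lam; split; last first.
    by case=> -[nz hs]; apply/hY; split => // s Ss; apply: hs; left.
  move=> Yl; have [nz hs] := proj1 (hY lam) Yl.
  case: (eqVneq ((rowv lam *m B) 0 0) 0) => bl.
    left; split => // s [/hs //| ->]; by rewrite linf_eval.
  right; split => // s [/hs //| ->].
  apply: (@gpoly_root P A B lam P0 bl); rewrite Ppoly_eval.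
  have := hs h S1h; rewrite (hscale lam (or_introl Yl) bl) => /eqP.
  rewrite mulf_eq0 expf_eq0 (negbTE bl) andbF /= => /eqP; exact.
case: (hirr Z1 Z2 cZ1 cZ2 dec) => hps.
  have [_ hz] := proj1 (hps q0) Yq.
  move: (hz (linf B) (or_intror erefl)); rewrite linf_eval qB => /eqP.
  by rewrite oner_eq0.
have [_ hz] := proj1 (hps p0) Yp.
move: (hz g (or_intror erefl)); rewrite gpoly_p0 // => /eqP.
by rewrite lead_coef_eq0 (negbTE P0).
Qed.


Definition kerset (M : 'M[CC]_4) : pset := fun lam => nonzero4 lam /\ rowv lam *m M = 0.

Lemma kerset_closed M : proj_closed (kerset M).
Proof.
exists (fun s => exists j : 'I_4, s = linf (col j M)); split.
  by move=> s [j ->]; exists 1%N; exact: linf_homog.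
move=> lam; split.
  move=> [nz hM]; split => // s [j ->].
  by rewrite linf_eval mul_colE hM mxE.
move=> [nz hs]; split => //; apply/rowP => j; rewrite [RHS]mxE.
by have := hs _ (ex_intro _ j erefl); rewrite linf_eval mul_colE.
Qed.

Lemma not_incl (Y1 Y2 : pset) : ~ pincl Y1 Y2 -> exists x, Y1 x /\ ~ Y2 x.
Proof.
move=> h; apply: NNPP => hn; apply: h => x h1; apply: NNPP => h2.
apply: hn; by exists x.
Qed.

Lemma rowv_nz lam : nonzero4 lam -> \rank (rowv lam) = 1%N.
Proof. by move/nz_rowv => h; rewrite rank_rV h. Qed.

Lemma kerset_dim M : (2 <= \rank M)%N -> proj_dim_le (kerset M) 1.
Proof.
move=> rM [Y [hY hch]].
have [[cl0 [p0 Yp0] _] sub0] := hY 0%N isT.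
have [irr1 sub1] := hY 1%N isT.
have [_ sub2] := hY 2%N isT.
have [inc01 /not_incl [q0 [Yq0 nYq0]]] := hch 0%N isT.
have [inc12 /not_incl [r0 [Yr0 nYr0]]] := hch 1%N isT.
have [nzp kp] := sub0 p0 Yp0.
have [nzq kq] := sub1 q0 Yq0.
have [nzr kr] := sub2 r0 Yr0.
set p := rowv p0; set q := rowv q0.
have nqp : ~~ (q <= p)%MS.
  apply/negP => /submxP [D hD].
  have hq : forall i, q0 i = D 0 0 * p0 i.
    move=> i; have := congr1 (fun m : 'rV_4 => m 0 i) hD.
    by rewrite /= !mxE big_ord1 !mxE.
  have c0 : D 0 0 != 0.
    apply/eqP => c0; case: nzq => i; by rewrite hq c0 mul0r eqxx.
  apply: nYq0; have -> : q0 = (fun i => D 0 0 * p0 i) by apply: functional_extensionality.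
  exact: closed_cone.
have npq : ~~ (p <= q)%MS.
  apply/negP => hpq; move/negP: nqp; apply.
  have [_ E] := mxrank_leqif_sup hpq.
  by rewrite -E /p /q !rowv_nz.
have hpqK : (p + q <= kermx M)%MS.
  by rewrite addsmx_sub !sub_kermx kp kq eqxx.
have r2 : (2 <= \rank (p + q))%N.
  rewrite leqNgt; apply/negP => r1; move/negP: nqp; apply.
  have hp : (p <= p + q)%MS by exact: addsmxSl.
  have [le E] := mxrank_leqif_sup hp.
  apply: submx_trans (addsmxSr p q) _; rewrite -E eqn_leq le /=.
  by rewrite /p rowv_nz // -ltnS.
have Kpq : (kermx M <= p + q)%MS.
  have [le E] := mxrank_leqif_sup hpqK.
  rewrite -E eqn_leq le /= mxrank_ker.
  apply: leq_trans r2; rewrite leq_subLR.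
  by move: rM; clear; lia.
have span : forall x, Y 1%N x \/ x = r0 ->
    exists a b : CC, forall i, x i = a * p0 i + b * q0 i.
  move=> x hx.
  have kx : rowv x *m M = 0 by case: hx => [/sub1 [] | ->].
  have : (rowv x <= p + q)%MS.
    by apply: submx_trans Kpq; rewrite sub_kermx kx eqxx.
  case/sub_addsmxP => -[u v] /= hu; exists (u 0 0), (v 0 0) => i.
  have := congr1 (fun m : 'rV_4 => m 0 i) hu.
  by rewrite /= !mxE !big_ord1 !mxE.
exact: (@irred_line _ _ _ _ irr1 (inc01 p0 Yp0) Yq0 nYr0 nzr nqp npq span).
Qed.


Lemma codim_kerset M : (2 <= \rank M)%N -> codim_ge2 (kerset M).
Proof. by move=> h; split; [exact: kerset_closed | exact: kerset_dim]. Qed.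

Definition Fm (R : rep141) : 'M[CC]_4 := \matrix_(i < 4, k < 4) rf R i 0 k.
Definition Gm (R : rep141) : 'M[CC]_4 := \matrix_(i < 4, k < 4) rg R i k 0.

Lemma rowF R i : row i (Fm R) = rf R i.
Proof. by apply/rowP => k; rewrite !mxE; congr (rf R i _ k); apply/val_inj; case: (0 : 'I_1) => -[]. Qed.

Lemma rowG R i : row i (Gm R) = (rg R i)^T.
Proof. by apply/rowP => k; rewrite !mxE; congr (rg R i k _); apply/val_inj; case: (0 : 'I_1) => -[]. Qed.

Lemma fsumE R lam : fsum R lam = rowv lam *m Fm R.
Proof.
apply/rowP => k; rewrite /fsum summxE !mxE; apply: eq_bigr => i _.
by rewrite !mxE.
Qed.

Lemma gsumE R lam : (gsum R lam)^T = rowv lam *m Gm R.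
Proof.
apply/rowP => k; rewrite /gsum !mxE summxE; apply: eq_bigr => i _.
by rewrite !mxE.
Qed.

Lemma theta_test (a g : RR) : 0 < a -> g < 0 ->
  theta_dot (a, - (a + g) / 4, g) (1, 1, 0)%N < 0 -> False.
Proof. rewrite /theta_dot /= => ha hg; lra. Qed.

Lemma rows_nz (M : 'M[CC]_4) : M != 0 -> exists i0, row i0 M != 0.
Proof.
move=> hM; apply: NNPP => hn; move/eqP: hM; apply; apply/row_matrixP => i.
rewrite row0; apply: NNPP => hi; apply: hn; exists i; by apply/eqP.
Qed.

Lemma rank1_rows (M : 'M[CC]_4) i0 : (\rank M <= 1)%N -> row i0 M != 0 ->
  forall i, exists D : 'M[CC]_1, row i M = D *m row i0 M.
Proof.
move=> r1 nz.
have HM : (M <= row i0 M)%MS.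
  have [le E] := mxrank_leqif_sup (row_sub i0 M).
  by rewrite -E eqn_leq le /= rank_rV nz.
by move=> i; apply/submxP; exact: submx_trans (row_sub i M) HM.
Qed.

Lemma dbl0 (x : 'M[CC]_1) : x + x = 0 -> x = 0.
Proof.
move=> h; apply/matrixP => a b; rewrite !ord1.
have := congr1 (fun m : 'M[CC]_1 => m 0 0) h; rewrite /= !mxE => /eqP.
rewrite -mulr2n mulrn_eq0 /= => /eqP ->; exact: erefl.
Qed.

Lemma one1_neq0 : (1%:M : 'M[CC]_1) != 0.
Proof. by rewrite -mxrank_eq0 mxrank1. Qed.

Lemma not_sub0 : ~ ((1%:M : 'M[CC]_1) <= (0 : 'M[CC]_1))%MS.
Proof. by rewrite submx0 (negbTE one1_neq0). Qed.

Lemma nz_p (Wm : 'M[CC]_1) (W0 : 'M[CC]_4) :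
  ~ [/\ Wm = 0, W0 = 0 & (1%:M : 'M[CC]_1) = 0].
Proof. by case=> _ _ /eqP; rewrite (negbTE one1_neq0). Qed.
Lemma nz_m (W0 : 'M[CC]_4) (Wp : 'M[CC]_1) :
  ~ [/\ (1%:M : 'M[CC]_1) = 0, W0 = 0 & Wp = 0].
Proof. by case=> /eqP; rewrite (negbTE one1_neq0). Qed.
Lemma pr_m (W0 : 'M[CC]_4) (Wp : 'M[CC]_1) :
  ~ [/\ (1%:M <= (0%R : 'M[CC]_1))%MS, (1%:M <= W0)%MS & (1%:M <= Wp)%MS].
Proof. by case=> /not_sub0. Qed.
Lemma pr_p (Wm : 'M[CC]_1) (W0 : 'M[CC]_4) :
  ~ [/\ (1%:M <= Wm)%MS, (1%:M <= W0)%MS & (1%:M <= (0%R : 'M[CC]_1))%MS].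
Proof. by case=> _ _ /not_sub0. Qed.

Theorem mainTheorem11 (R : rep141) :
  (glob_surj R /\ ~ loc_inj R) \/ (glob_inj R /\ ~ loc_surj R) ->
  forall alpha gamma : RR,
    ~ theta_stable (alpha, - (alpha + gamma) / 4, gamma) R.
Proof.
move=> hyp alpha gamma [_ hst].
have r0m : (\rank (0%R : 'M[CC]_1) = 0)%N by rewrite mxrank0.
have r04 : (\rank (0%R : 'M[CC]_4) = 0)%N by rewrite mxrank0.
have hg : gamma < 0.
  have sub : is_subrep R (0%R : 'M[CC]_1) (0%R : 'M[CC]_4) (1%:M : 'M[CC]_1).
    by move=> i; rewrite !mul0mx !sub0mx.
  have := hst _ _ _ sub (nz_p _ _) (pr_m _ _).
  rewrite r0m r04 mxrank1 /theta_dot /= => h; rewrite ?mulr0 ?addr0 ?mulr1 in h; lra.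
have ha : 0 < alpha.
  have sub : is_subrep R (0%R : 'M[CC]_1) (1%:M : 'M[CC]_4) (1%:M : 'M[CC]_1).
    by move=> i; rewrite !submx1.
  have := hst _ _ _ sub (nz_p _ _) (pr_m _ _).
  rewrite r0m !mxrank1 /theta_dot /= => h; rewrite ?mulr0 ?addr0 ?mulr1 in h; lra.
have a00 : forall i, rf R i *m rg R i = 0 by move=> i; apply: dbl0; exact: rrel.
case: hyp => [[_ nli] | [_ nls]].
  apply: nli.
  suff r2 : (2 <= \rank (Fm R))%N.
    exists (kerset (Fm R)); split; first exact: codim_kerset.
    move=> lam nz nZ; rewrite fsumE /row_free rank_rV.
    have -> : (rowv lam *m Fm R != 0) by apply/eqP => E; apply: nZ.
    exact: erefl.
  rewrite leqNgt; apply/negP; rewrite ltnS => r1.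
  case: (eqVneq (Fm R) 0) => F0.
    have rf0 : forall i, rf R i = 0 by move=> i; rewrite -rowF F0 row0.
    have sub : is_subrep R (1%:M : 'M[CC]_1) (0%R : 'M[CC]_4) (0%R : 'M[CC]_1).
      by move=> i; rewrite mul1mx rf0 mul0mx !sub0mx.
    have := hst _ _ _ sub (nz_m _ _) (pr_p _ _).
    rewrite r0m r04 mxrank1 /theta_dot /= => h; rewrite ?mulr0 ?addr0 ?mulr1 in h; clear -h ha hg; lra.
  have [i0 nz] := @rows_nz _ F0.
  have hD := @rank1_rows _ _ r1 nz.
  have a0j : forall j, rf R i0 *m rg R j = 0.
    move=> j; have := rrel R j i0.
    have [D hD'] := hD j; rewrite !rowF in hD'.
    by rewrite hD' -mulmxA a00 mulmx0 addr0.
  have aij : forall i j, rf R i *m rg R j = 0.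
    move=> i j; have [D hD'] := hD i; rewrite !rowF in hD'.
    by rewrite hD' -mulmxA a0j mulmx0.
  have sub : is_subrep R (1%:M : 'M[CC]_1) (Fm R) (0%R : 'M[CC]_1).
    move=> i; rewrite mul1mx -rowF row_sub; split => //.
    have -> : Fm R *m rg R i = 0.
      by apply/row_matrixP => k; rewrite row_mul rowF aij row0.
    exact: sub0mx.
  have rF : \rank (Fm R) = 1%N.
    by apply/eqP; rewrite eqn_leq r1 lt0n mxrank_eq0 F0.
  have := hst _ _ _ sub (nz_m _ _) (pr_p _ _).
  rewrite r0m rF mxrank1 /theta_dot /= => h; rewrite ?mulr0 ?addr0 ?mulr1 in h; clear -h ha hg; lra.
apply: nls.
suff r2 : (2 <= \rank (Gm R))%N.
  exists (kerset (Gm R)); split; first exact: codim_kerset.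
  move=> lam nz nZ; rewrite /row_full -mxrank_tr gsumE rank_rV.
  have -> : (rowv lam *m Gm R != 0) by apply/eqP => E; apply: nZ.
  exact: erefl.
rewrite leqNgt; apply/negP; rewrite ltnS => r1.
case: (eqVneq (Gm R) 0) => G0.
  have rg0 : forall i, rg R i = 0.
    by move=> i; rewrite -[rg R i]trmxK -rowG G0 row0 trmx0.
  have sub : is_subrep R (1%:M : 'M[CC]_1) (1%:M : 'M[CC]_4) (0%R : 'M[CC]_1).
    by move=> i; rewrite submx1 mul1mx rg0 sub0mx.
  have := hst _ _ _ sub (nz_m _ _) (pr_p _ _).
  rewrite r0m !mxrank1 /theta_dot /= => h; rewrite ?mulr0 ?addr0 ?mulr1 in h; clear -h ha hg; lra.
have [i0 nz] := @rows_nz _ G0.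
have hD := @rank1_rows _ _ r1 nz.
have hg' : forall i, exists D : 'M[CC]_1, rg R i = rg R i0 *m D.
  move=> i; have [D hD'] := hD i; exists D^T.
  by rewrite -[rg R i]trmxK -rowG hD' trmx_mul rowG trmxK.
have a0j : forall j, rf R i0 *m rg R j = 0.
  by move=> j; have [D ->] := hg' j; rewrite mulmxA a00 mul0mx.
have aj0 : forall j, rf R j *m rg R i0 = 0.
  by move=> j; have := rrel R i0 j; rewrite a0j addr0.
have sub : is_subrep R (1%:M : 'M[CC]_1) (kermx (rg R i0)) (0%R : 'M[CC]_1).
  move=> i; rewrite mul1mx sub_kermx aj0 eqxx; split => //.
  by have [D ->] := hg' i; rewrite mulmxA mulmx_ker mul0mx sub0mx.
have rK : \rank (kermx (rg R i0)) = 3%N.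
  by rewrite mxrank_ker -mxrank_tr -rowG rank_rV nz.
have := hst _ _ _ sub (nz_m _ _) (pr_p _ _).
rewrite r0m rK mxrank1 /theta_dot /= => h; rewrite ?mulr0 ?addr0 ?mulr1 in h; clear -h ha hg; lra.
Qed.
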